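(* Let $k,n$ be integers with $k\geq 5$ and $n\geq 4$, and let $c$ be an exact $k$-coloring of $\mathcal{B}_n$ with $c(\emptyset)\neq c([n])$. Then $\mathcal{B}_n$ contains no rainbow induced copy of $\mathcal{B}_2$ if and only if $k=5$ and $c$ is of Type 1.
   Context: $\mathcal{B}_n$ is the Boolean lattice of subsets of $[n]$ under inclusion. For $X\subseteq Y$: $\mathcal{B}_{[X,Y]}=\{Z:X\subseteq Z\subseteq Y\}$, and $\mathcal{B}_{(X,Y)}$, $\mathcal{B}_{(X,Y]}$, $\mathcal{B}_{[X,Y)}$ are defined analogously with strict inclusions at the open ends. An exact $k$-coloring is a surjective map $c:\mathcal{B}_n\to[k]$. A rainbow induced copy of $\mathcal{B}_2$ is four sets $W_1,W_2,W_3,W_4$ with $W_1\subsetneq W_2\subsetneq W_4$, $W_1\subsetneq W_3\subsetneq W_4$, $W_2,W_3$ incomparable, and $c(W_1),\dots,c(W_4)$ pairwise distinct. ''Families $\mathcal{F}_1,\dots,\mathcal{F}_r$ are monochromatically colored with distinct colors'' means each $\mathcal{F}_i$ is monochromatic and no two sets from different families share a color. The coloring $c$ is of Type 1 if there exist $X_0,Y_0$ with $\emptyset\subsetneq X_0\subsetneq Y_0\subsetneq[n]$ and $|Y_0|\geq|X_0|+2$ such that the families $\mathcal{B}_{[\emptyset,Y_0]}\setminus\mathcal{B}_{[X_0,Y_0]}$, $\{X_0\}$, $\mathcal{B}_{(X_0,Y_0)}$, $\{Y_0\}$, $\mathcal{B}_{[X_0,[n]]}\setminus\mathcal{B}_{[X_0,Y_0]}$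 are monochromatically colored with distinct colors, and each set in $\mathcal{B}_n\setminus(\mathcal{B}_{[\emptyset,Y_0]}\cup\mathcal{B}_{[X_0,[n]]})$ has the same color as the sets of the first or of the last of these families. *)

(* Defs.v *)
From mathcomp Require Import all_boot.
Set Implicit Arguments. Unset Strict Implicit. Unset Printing Implicit Defensive.

(* Subsets of [n] are modelled as {set 'I_n}; colors [k] as 'I_k. *)

Definition exact_coloring (n k : nat) (c : {set 'I_n} -> 'I_k) : Prop :=
  forall i : 'I_k, exists Z : {set 'I_n}, c Z = i.

Definition rainbow_B2 (n k : nat) (c : {set 'I_n} -> 'I_k) : Prop :=
  exists W1 W2 W3 W4 : {set 'I_n},
    [/\ W1 \proper W2, W2 \proper W4, W1 \proper W3, W3 \proper W4 &
        (~~ (W2 \subset W3) /\ ~~ (W3 \subset W2))] /\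
    uniq [:: c W1; c W2; c W3; c W4].

Definition type1 (n k : nat) (c : {set 'I_n} -> 'I_k) : Prop :=
  exists X0 Y0 : {set 'I_n},
    [/\ set0 \proper X0, X0 \proper Y0, Y0 \proper [set: 'I_n] &
        #|X0| + 2 <= #|Y0| ] /\
    exists a b d e f : 'I_k,
      uniq [:: a; b; d; e; f] /\
      (forall Z : {set 'I_n}, Z \subset Y0 -> ~~ (X0 \subset Z) -> c Z = a) /\
      [/\ c X0 = b,
          (forall Z : {set 'I_n}, X0 \proper Z -> Z \proper Y0 -> c Z = d),
          c Y0 = e,
          (forall Z : {set 'I_n}, X0 \subset Z -> ~~ (Z \subset Y0) -> c Z = f) &
          (forall Z : {set 'I_n}, ~~ (Z \subset Y0) -> ~~ (X0 \subset Z) -> c Z = a \/ c Z = f)].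

(* Main.v *)
Require Import Defs.
From mathcomp Require Import all_boot zify.
Set Implicit Arguments. Unset Strict Implicit. Unset Printing Implicit Defensive.


Lemma T_lem n k (c : {set 'I_n} -> 'I_k) : ~ rainbow_B2 c ->
  forall W1 W2 W3 W4 : {set 'I_n}, W1 \proper W2 -> W2 \proper W4 -> W1 \proper W3 -> W3 \proper W4 ->
  ~~ (W2 \subset W3) -> ~~ (W3 \subset W2) ->
  c W1 != c W2 -> c W1 != c W4 -> c W2 != c W4 ->
  c W3 = c W1 \/ c W3 = c W2 \/ c W3 = c W4.
Proof.
move=> nr W1 W2 W3 W4 h12 h24 h13 h34 n23 n32 d12 d14 d24.
case E1: (c W3 == c W1); first by left; apply/eqP.
case E2: (c W3 == c W2); first by right; left; apply/eqP.
case E4: (c W3 == c W4); first by right; right; apply/eqP.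
exfalso; apply: nr; exists W1, W2, W3, W4; split; first by split.
rewrite /= !inE !negb_or d12 d14 d24 eq_sym E1 eq_sym E2 E4.
done.
Qed.

Definition sp n k (c : {set 'I_n} -> 'I_k) Z := (c Z != c set0) && (c Z != c setT).

Lemma F1 n k (c : {set 'I_n} -> 'I_k) : ~ rainbow_B2 c -> c set0 != c setT ->
  forall X Y : {set 'I_n}, sp c X -> sp c Y -> c X != c Y -> X \subset Y \/ Y \subset X.
Proof.
move=> nr hne X Y /andP[X0 XT] /andP[Y0 YT] dXY.
case: (boolP (X \subset Y)) => XY; first by left.
case: (boolP (Y \subset X)) => YX; first by right.
have pX0 : set0 \proper X by rewrite proper0; apply: contraNneq X0 => ->.
have pY0 : set0 \proper Y by rewrite proper0; apply: contraNneq Y0 => ->.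
have pXT : X \proper setT by rewrite properT; apply: contraNneq XT => ->.
have pYT : Y \proper setT by rewrite properT; apply: contraNneq YT => ->.
have := T_lem nr pX0 pXT pY0 pYT XY YX.
rewrite eq_sym X0 hne XT => /(_ isT isT isT).
by case=> [/eqP|[/eqP|/eqP]]; rewrite ?(negbTE Y0) ?(negbTE YT) // eq_sym (negbTE dXY).
Qed.


Lemma sub_ne (n : nat) (X Y : {set 'I_n}) : X \subset Y -> X != Y -> X \proper Y.
Proof. by move=> h1 h2; rewrite properEneq h1 h2. Qed.

Lemma add_props n (A B C : {set 'I_n}) x :
  A \proper B -> B \proper C -> x \in C -> x \notin B ->
  A \proper (x |: A) /\ (x |: A) \proper C /\ ~~ (B \subset x |: A) /\ ~~ ((x |: A) \subset B).
Proof.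
move=> /properP[AB [y yB yA]] /properP[BC _] xC xB.
have xA : x \notin A by apply: contra xB; apply: (subsetP AB).
have yx : y != x by apply: contraNneq xB => <-.
split; first by apply/properP; split; [apply/subsetP=> z zA; rewrite in_setU1 zA orbT|
  exists x; rewrite ?in_setU1 ?eqxx].
split.
  apply/properP; split.
    apply/subsetP=> z; rewrite in_setU1 => /orP[/eqP->//|zA].
    by apply: (subsetP BC); apply: (subsetP AB).
  by exists y; [apply: (subsetP BC)| rewrite in_setU1 negb_or yx].
split; apply/subsetPn.
  by exists y; rewrite // in_setU1 negb_or yx.
by exists x; rewrite // in_setU1 eqxx.
Qed.

Lemma del_props n (A B C : {set 'I_n}) y :
  A \proper B -> B \proper C -> y \in B -> y \notin A ->
  A \proper (C :\ y) /\ (C :\ y) \proper C /\ ~~ (B \subset C :\ y) /\ ~~ ((C :\ y) \subset B).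
Proof.
move=> /properP[AB _] /properP[BC [x xC xB]] yB yA.
have yC : y \in C by apply: (subsetP BC).
have xy : x != y by apply: contraNneq xB => ->.
split.
  apply/properP; split.
    apply/subsetP=> z zA; rewrite in_setD1 (subsetP BC _ (subsetP AB _ zA)) andbT.
    by apply: contraNneq yA => <-.
  exists x; rewrite ?in_setD1 ?xy //; apply: contra xB; apply: (subsetP AB).
split.
  by apply/properP; split; [apply/subsetP=> z; rewrite in_setD1 => /andP[]|
    exists y; rewrite ?in_setD1 ?eqxx].
split; apply/subsetPn.
  by exists y; rewrite // in_setD1 eqxx.
by exists x; rewrite // in_setD1 xy.
Qed.

Lemma ML n k (c : {set 'I_n} -> 'I_k) : ~ rainbow_B2 c -> c set0 != c setT ->
  forall A B C : {set 'I_n}, A \proper B -> B \proper C ->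
  sp c A -> sp c B -> sp c C -> c A != c B -> c B != c C -> c A != c C ->
  forall Z : {set 'I_n}, A \proper Z -> Z \proper C -> c Z = c B.
Proof.
move=> nr hne A B C AB BC sA sB sC dAB dBC dAC.
have S1 : forall D Z : {set 'I_n}, A \proper D -> D \proper C -> c D = c B ->
    A \proper Z -> Z \proper C -> ~~ (D \subset Z) -> ~~ (Z \subset D) -> c Z = c B.
  move=> D Z AD DC cD AZ ZC DZ ZD.
  have := T_lem nr AD DC AZ ZC DZ ZD; rewrite cD => /(_ dAB dAC dBC).
  case=> [E|[//|E]].
    have := F1 nr hne (X:=Z) (Y:=D); rewrite /sp E cD => /(_ sA sB dAB).
    by case=> h; [move: ZD|move: DZ]; rewrite h.
  have := F1 nr hne (X:=Z) (Y:=D); rewrite /sp E cD => /(_ sC sB); rewrite eq_sym => /(_ dBC).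
  by case=> h; [move: ZD|move: DZ]; rewrite h.
move=> Z AZ ZC.
have [x xC xB] : exists2 x, x \in C & x \notin B by case/properP: BC.
have [y yB yA] : exists2 y, y \in B & y \notin A by case/properP: AB.
case: (boolP (Z \subset B)) => ZB; case: (boolP (B \subset Z)) => BZ.
- by have /eqP-> : Z == B by rewrite eqEsubset ZB BZ.
- have [AW [WC [BW WB]]] := add_props AB BC xC xB.
  have cW := S1 B _ AB BC erefl AW WC BW WB.
  apply: (S1 _ _ AW WC cW AZ ZC); apply/subsetPn.
    by exists x; rewrite ?in_setU1 ?eqxx //; apply: contra xB; apply: (subsetP ZB).
  case/properP: AZ => _ [z zZ zA]; exists z => //.
  rewrite in_setU1 negb_or zA andbT; apply: contraNneq xB => <-; exact: (subsetP ZB).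
- have [AW [WC [BW WB]]] := del_props AB BC yB yA.
  have cW := S1 B _ AB BC erefl AW WC BW WB.
  apply: (S1 _ _ AW WC cW AZ ZC); apply/subsetPn.
    case/properP: ZC => _ [w wC wZ]; exists w; last by [].
    rewrite in_setD1 wC andbT; apply: contraNneq wZ => ->; exact: (subsetP BZ).
  by exists y; rewrite ?in_setD1 ?eqxx //; apply: (subsetP BZ).
- exact: (S1 B Z AB BC erefl AZ ZC).
Qed.


Lemma mid_props n (A C : {set 'I_n}) u v :
  A \subset C -> u \in C -> u \notin A -> v \in C -> v \notin A -> u != v ->
  A \proper (u |: A) /\ (u |: A) \proper C /\ A \proper (C :\ u) /\ (C :\ u) \proper C.
Proof.
move=> AC uC uA vC vA uv.
split; first by apply/properP; split; [apply/subsetP=> z zA; rewrite in_setU1 zA orbT|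
  exists u; rewrite ?in_setU1 ?eqxx].
split.
  apply/properP; split.
    by apply/subsetP=> z; rewrite in_setU1 => /orP[/eqP->//|zA]; apply: (subsetP AC).
  by exists v; rewrite // in_setU1 negb_or vA andbT eq_sym.
split.
  apply/properP; split.
    apply/subsetP=> z zA; rewrite in_setD1 (subsetP AC _ zA) andbT.
    by apply: contraNneq uA => <-.
  by exists v; rewrite // in_setD1 vC andbT eq_sym.
by apply/properP; split; [apply/subsetP=> z; rewrite in_setD1 => /andP[]|
    exists u; rewrite ?in_setD1 ?eqxx].
Qed.

Lemma OL n k (c : {set 'I_n} -> 'I_k) : ~ rainbow_B2 c -> c set0 != c setT ->
  forall A B C : {set 'I_n}, A \proper B -> B \proper C ->
  sp c A -> sp c B -> sp c C -> c A != c B -> c B != c C -> c A != c C ->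
  forall S : {set 'I_n}, sp c S -> c S != c B -> S \subset A \/ C \subset S.
Proof.
move=> nr hne A B C AB BC sA sB sC dAB dBC dAC S sS dS.
have ML' := ML nr hne AB BC sA sB sC dAB dBC dAC.
have [x xC xB] : exists2 x, x \in C & x \notin B by case/properP: BC.
have [y yB yA] : exists2 y, y \in B & y \notin A by case/properP: AB.
have AC : A \subset C by apply: proper_sub; apply: proper_trans AB BC.
have BC' : B \subset C by apply: proper_sub.
have AB' : A \subset B by apply: proper_sub.
have xA : x \notin A by apply: contra xB; apply: (subsetP AB').
have yC : y \in C by apply: (subsetP BC').
have xy : x != y by apply: contraNneq xB => ->.
have [Ax [xC' [Ax' x'C]]] := mid_props AC xC xA yC yA xy.
have [Ay [yC' [Ay' y'C]]] := mid_props AC yC yA xC xA (ltac:(by rewrite eq_sym)).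
have cmp : forall Z : {set 'I_n}, A \proper Z -> Z \proper C -> S \subset Z \/ Z \subset S.
  move=> Z AZ ZC; have cZ := ML' Z AZ ZC.
  apply: (F1 nr hne sS); first by rewrite /sp cZ.
  by rewrite cZ.
case: (boolP (A \subset S)) => AS.
  case: (boolP (S \subset C)) => SC.
    case: (eqVneq S A) => [->|SA]; first by left.
    case: (eqVneq S C) => [->|SC']; first by right.
    have := ML' S (sub_ne AS (ltac:(by rewrite eq_sym))) (sub_ne SC SC').
    by move=> h; move: dS; rewrite h eqxx.
  right.
  have h1 : (C :\ x) \subset S.
    case: (cmp _ Ax' x'C) => // h; move: SC; rewrite (subset_trans h) //.
    by apply: proper_sub.
  have h2 : (C :\ y) \subset S.
    case: (cmp _ Ay' y'C) => // h; move: SC; rewrite (subset_trans h) //.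
    by apply: proper_sub.
  apply/subsetP=> z zC; case: (eqVneq z x) => [->|zx].
    by apply: (subsetP h2); rewrite in_setD1 xy.
  by apply: (subsetP h1); rewrite in_setD1 zx.
left.
have h1 : S \subset (x |: A).
  case: (cmp _ Ax xC') => // h; move: AS; rewrite (subset_trans _ h) //.
  by apply: proper_sub.
have h2 : S \subset (y |: A).
  case: (cmp _ Ay yC') => // h; move: AS; rewrite (subset_trans _ h) //.
  by apply: proper_sub.
apply/subsetP=> z zS.
move: (subsetP h1 _ zS) (subsetP h2 _ zS); rewrite !in_setU1.
case: (eqVneq z x) => [->|_] /=; last by [].
by rewrite (negbTE xy) /=.
Qed.


Lemma structure n k (c : {set 'I_n} -> 'I_k) : ~ rainbow_B2 c -> c set0 != c setT ->
  forall A B C : {set 'I_n}, A \proper B -> B \proper C ->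
  sp c A -> sp c B -> sp c C -> c A != c B -> c B != c C -> c A != c C ->
  [/\ forall S, c S = c A -> S = A,
      forall S, c S = c C -> S = C,
      forall S, c S = c B -> A \proper S /\ S \proper C &
      forall S, sp c S -> [\/ c S = c A, c S = c B | c S = c C]].
Proof.
move=> nr hne A B C AB BC sA sB sC dAB dBC dAC.
have ML' := ML nr hne AB BC sA sB sC dAB dBC dAC.
have OL' := OL nr hne AB BC sA sB sC dAB dBC dAC.
have [x xC xB] : exists2 x, x \in C & x \notin B by case/properP: BC.
have [y yB yA] : exists2 y, y \in B & y \notin A by case/properP: AB.
have AC : A \subset C by apply: proper_sub; apply: proper_trans AB BC.
have BC' : B \subset C by apply: proper_sub.
have AB' : A \subset B by apply: proper_sub.
have xA : x \notin A by apply: contra xB; apply: (subsetP AB').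
have yC : y \in C by apply: (subsetP BC').
have xy : x != y by apply: contraNneq xB => ->.
have [Ax [xC' _]] := mid_props AC xC xA yC yA xy.
have cX := ML' _ Ax xC'.
have sX : sp c (x |: A) by rewrite /sp cX.
have Hlow : forall S, sp c S -> S \proper A -> c S != c A -> c S != c B -> False.
  move=> S sS SA d1 d2.
  have [h|h] := OL nr hne SA AB sS sA sB d1 dAB d2 sX (ltac:(by rewrite cX eq_sym)).
    have := proper_sub_trans SA (subset_trans (proper_sub Ax) h).
    by rewrite properE subxx.
  by move: (subsetP h _ yB); rewrite in_setU1 (negbTE yA) orbF => /eqP yx; move: xy; rewrite yx eqxx.
have Hhigh : forall S, sp c S -> C \proper S -> c S != c C -> c S != c B -> False.
  move=> S sS CS d1 d2.
  have [h|h] := OL nr hne BC CS sB sC sS dBC (ltac:(by rewrite eq_sym)) (ltac:(by rewrite eq_sym)) sX (ltac:(by rewrite cX)).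
    by move: (subsetP h x); rewrite in_setU1 eqxx (negbTE xB) => /(_ isT).
  have := proper_trans (sub_proper_trans h xC') CS.
  by rewrite properE subxx.
have spE : forall S, c S = c A \/ c S = c B \/ c S = c C -> sp c S.
  by move=> S; rewrite /sp; case=> [->|[->|->]].
split.
- move=> S cS; have sS : sp c S by apply: spE; left.
  have [h|h] := OL' S sS (ltac:(by rewrite cS)).
    case: (eqVneq S A) => // SA.
    have SB := proper_trans (sub_ne h SA) AB.
    have := ML nr hne SB BC sS sB sC (ltac:(by rewrite cS)) dBC (ltac:(by rewrite cS)) (sub_ne h SA) (proper_trans AB BC).
    by move=> e; move: dAB; rewrite e eqxx.
  case: (eqVneq S C) => [SC|SC]; first by move: dAC; rewrite -SC cS eqxx.
  by exfalso; apply: (Hhigh S sS (sub_ne h (ltac:(by rewrite eq_sym)))); rewrite cS // eq_sym.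
- move=> S cS; have sS : sp c S by apply: spE; right; right.
  have [h|h] := OL' S sS (ltac:(by rewrite cS eq_sym)).
    case: (eqVneq S A) => [SA|SA]; first by move: dAC; rewrite -SA cS eqxx.
    by exfalso; apply: (Hlow S sS (sub_ne h SA)); rewrite cS // eq_sym.
  case: (eqVneq S C) => // SC.
  have CS := sub_ne h (ltac:(by rewrite eq_sym) : C != S).
  have := ML nr hne AB (proper_trans BC CS) sA sB sS dAB (ltac:(by rewrite cS)) (ltac:(by rewrite cS)) (proper_trans AB BC) CS.
  by move=> e; move: dBC; rewrite e eqxx.
- move=> S cS; have sS : sp c S by apply: spE; right; left.
  split.
    have [h|h] := F1 nr hne sS sA (ltac:(by rewrite cS eq_sym)).
      case: (eqVneq S A) => [SA|SA]; first by move: dAB; rewrite -SA cS eqxx.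
      have SA' := sub_ne h SA.
      have := ML nr hne SA' (proper_trans AB BC) sS sA sC (ltac:(by rewrite cS eq_sym)) dAC (ltac:(by rewrite cS)) (proper_trans SA' AB) BC.
      by move=> e; move: dAB; rewrite e eqxx.
    case: (eqVneq A S) => [SA|SA]; first by move: dAB; rewrite SA cS eqxx.
    exact: sub_ne h SA.
  have [h|h] := F1 nr hne sS sC (ltac:(by rewrite cS)).
    case: (eqVneq S C) => [SC|SC]; first by move: dBC; rewrite -SC cS eqxx.
    exact: sub_ne h SC.
  case: (eqVneq C S) => [SC|SC]; first by move: dBC; rewrite SC cS eqxx.
  have CS := sub_ne h SC.
  have := ML nr hne (proper_trans AB BC) CS sA sC sS dAC (ltac:(by rewrite cS eq_sym)) (ltac:(by rewrite cS)) AB (proper_trans BC CS).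
  by move=> e; move: dBC; rewrite e eqxx.
- move=> S sS.
  case: (eqVneq (c S) (c A)) => [|d1]; first by constructor 1.
  case: (eqVneq (c S) (c B)) => [|d2]; first by constructor 2.
  case: (eqVneq (c S) (c C)) => [|d3]; first by constructor 3.
  exfalso; have [h|h] := OL' S sS d2.
    case: (eqVneq S A) => [SA|SA]; first by move: d1; rewrite SA eqxx.
    exact: (Hlow S sS (sub_ne h SA) d1 d2).
  case: (eqVneq C S) => [SC|SC]; first by move: d3; rewrite SC eqxx.
  exact: (Hhigh S sS (sub_ne h SC) d3 d2).
Qed.


Lemma T_W1 n k (c : {set 'I_n} -> 'I_k) : ~ rainbow_B2 c ->
  forall W1 W2 W3 W4 : {set 'I_n}, W1 \proper W2 -> W2 \proper W4 -> W1 \proper W3 -> W3 \proper W4 ->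
  ~~ (W2 \subset W3) -> ~~ (W3 \subset W2) ->
  c W2 != c W3 -> c W2 != c W4 -> c W3 != c W4 ->
  c W1 = c W2 \/ c W1 = c W3 \/ c W1 = c W4.
Proof.
move=> nr W1 W2 W3 W4 h12 h24 h13 h34 n23 n32 d23 d24 d34.
case E1: (c W1 == c W2); first by left; apply/eqP.
case E2: (c W1 == c W3); first by right; left; apply/eqP.
case E4: (c W1 == c W4); first by right; right; apply/eqP.
exfalso; apply: nr; exists W1, W2, W3, W4; split; first by split.
by rewrite /= !inE !negb_or d23 d24 d34 E1 E2 E4.
Qed.

Lemma T_W4 n k (c : {set 'I_n} -> 'I_k) : ~ rainbow_B2 c ->
  forall W1 W2 W3 W4 : {set 'I_n}, W1 \proper W2 -> W2 \proper W4 -> W1 \proper W3 -> W3 \proper W4 ->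
  ~~ (W2 \subset W3) -> ~~ (W3 \subset W2) ->
  c W1 != c W2 -> c W1 != c W3 -> c W2 != c W3 ->
  c W4 = c W1 \/ c W4 = c W2 \/ c W4 = c W3.
Proof.
move=> nr W1 W2 W3 W4 h12 h24 h13 h34 n23 n32 d12 d13 d23.
case E1: (c W4 == c W1); first by left; apply/eqP.
case E2: (c W4 == c W2); first by right; left; apply/eqP.
case E4: (c W4 == c W3); first by right; right; apply/eqP.
exfalso; apply: nr; exists W1, W2, W3, W4; split; first by split.
by rewrite /= !inE !negb_or d12 d13 d23 eq_sym E1 eq_sym E2 eq_sym E4.
Qed.

Lemma low_part n k (c : {set 'I_n} -> 'I_k) : ~ rainbow_B2 c -> c set0 != c setT ->
  forall A B C : {set 'I_n}, A \proper B -> B \proper C ->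
  sp c A -> sp c B -> sp c C -> c A != c B -> c B != c C -> c A != c C ->
  (forall Z : {set 'I_n}, Z \subset C -> ~~ (A \subset Z) -> c Z = c set0) /\
  (forall Z : {set 'I_n}, A \subset Z -> ~~ (Z \subset C) -> c Z = c setT).
Proof.
move=> nr hne A B C AB BC sA sB sC dAB dBC dAC.
have ML' := ML nr hne AB BC sA sB sC dAB dBC dAC.
have [Pb Pe Pd _] := structure nr hne AB BC sA sB sC dAB dBC dAC.
have [x xC xB] : exists2 x, x \in C & x \notin B by case/properP: BC.
have [y yB yA] : exists2 y, y \in B & y \notin A by case/properP: AB.
have AC : A \subset C by apply: proper_sub; apply: proper_trans AB BC.
have AC' : A \proper C by apply: proper_trans AB BC.
have BC' : B \subset C by apply: proper_sub.
have AB' : A \subset B by apply: proper_sub.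
have xA : x \notin A by apply: contra xB; apply: (subsetP AB').
have yC : y \in C by apply: (subsetP BC').
have xy : x != y by apply: contraNneq xB => ->.
case/andP: sA => sA1 sA2; case/andP: sB => sB1 sB2; case/andP: sC => sC1 sC2.
have other : forall z, exists w, [/\ w \in C, w \notin A & w != z].
  move=> z; case: (eqVneq x z) => [xz|xz]; last by exists x.
  by exists y; split=> //; rewrite -xz eq_sym.
have caseA1 : forall Z : {set 'I_n}, Z \subset C -> ~~ (A \subset Z) -> ~~ (Z \subset A) -> c Z = c set0.
  move=> Z ZC AZ ZA.
  have [z zZ zA] := subsetPn ZA.
  have zC : z \in C by apply: (subsetP ZC).
  have [w [wC wA wz]] := other z.
  have [AD [DC _]] := mid_props AC wC wA zC zA wz.
  have cD := ML' _ AD DC.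
  have p0D : set0 \proper (w |: A) by rewrite proper0; apply/set0Pn; exists w; rewrite in_setU1 eqxx.
  have p0Z : set0 \proper Z by rewrite proper0; apply/set0Pn; exists z.
  have pZC : Z \proper C.
    rewrite properEneq ZC andbT; apply: contraNneq AZ => ->; exact: AC.
  have nDZ : ~~ ((w |: A) \subset Z).
    apply: contra AZ => h; apply: subset_trans _ h; apply/subsetP=> u uA; by rewrite in_setU1 uA orbT.
  have nZD : ~~ (Z \subset (w |: A)).
    by apply/subsetPn; exists z; rewrite // in_setU1 negb_or zA andbT eq_sym.
  have := T_lem nr p0D DC p0Z pZC nDZ nZD; rewrite cD => /(_ (ltac:(by rewrite eq_sym)) (ltac:(by rewrite eq_sym)) dBC).
  case=> [//|[e|e]].
    by have [h _] := Pd _ e; move: AZ; rewrite (proper_sub h).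
  by move: AZ; rewrite (Pe _ e) AC.
split.
  move=> Z ZC AZ.
  case: (boolP (Z \subset A)) => ZA; last by apply: caseA1.
  have ZA' : Z \proper A by rewrite properE ZA AZ.
  have xZ : x \notin Z by apply: contra xA; apply: (subsetP ZA).
  have [a0 a0A a0Z] := subsetPn AZ.
  have nAZ' : ~~ (A \subset x |: Z).
    apply/subsetPn; exists a0; rewrite // in_setU1 negb_or a0Z andbT.
    by apply: contraNneq xA => <-.
  have nZ'A : ~~ ((x |: Z) \subset A) by apply/subsetPn; exists x; rewrite ?in_setU1 ?eqxx.
  have Z'C : (x |: Z) \subset C.
    by apply/subsetP=> u; rewrite in_setU1 => /orP[/eqP->//|uZ]; apply: (subsetP ZC).
  have cZ' := caseA1 _ Z'C nAZ' nZ'A.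
  have pZZ' : Z \proper (x |: Z).
    by apply/properP; split; [apply/subsetP=> u uZ; rewrite in_setU1 uZ orbT|exists x; rewrite ?in_setU1 ?eqxx].
  have pZ'C : (x |: Z) \proper C.
    rewrite properEneq Z'C andbT; apply: contraNneq nAZ' => ->; exact: AC.
  have := T_W1 nr ZA' AC' pZZ' pZ'C nAZ' nZ'A; rewrite cZ' => /(_ sA1 dAC (ltac:(by rewrite eq_sym))).
  case=> [e|[//|e]].
    by move: AZ; rewrite (Pb _ e) subxx.
  by move: AZ; rewrite (Pe _ e) AC.
have caseB1 : forall Z : {set 'I_n}, A \subset Z -> ~~ (Z \subset C) -> ~~ (C \subset Z) -> c Z = c setT.
  move=> Z AZ ZC CZ.
  have [u uC uZ] := subsetPn CZ.
  have uA : u \notin A by apply: contra uZ; apply: (subsetP AZ).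
  have [w [wC wA wu]] := other u.
  have [_ [_ [AD DC]]] := mid_props AC wC wA uC uA wu.
  have cD := ML' _ AD DC.
  have pDT : (C :\ w) \proper setT by apply: proper_sub_trans DC (subsetT _).
  have pAZ : A \proper Z.
    rewrite properEneq AZ andbT; apply: contraNneq ZC => <-; exact: AC.
  have pZT : Z \proper setT.
    by rewrite properT; apply: contraNneq CZ => ->; apply: subsetT.
  have nDZ : ~~ ((C :\ w) \subset Z).
    by apply/subsetPn; exists u; rewrite // in_setD1 uC andbT eq_sym.
  have nZD : ~~ (Z \subset (C :\ w)).
    apply: contra ZC => h; apply: subset_trans h _; by apply/subsetP=> v; rewrite in_setD1 => /andP[].
  have := T_lem nr AD pDT pAZ pZT nDZ nZD; rewrite cD => /(_ dAB sA2 sB2).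
  case=> [e|[e|//]].
    by move: ZC; rewrite (Pb _ e) AC.
  by have [_ h] := Pd _ e; move: ZC; rewrite (proper_sub h).
move=> Z AZ ZC.
case: (boolP (C \subset Z)) => CZ; last by apply: caseB1.
have [u uZ uC] := subsetPn ZC.
have xZ : x \in Z by apply: (subsetP CZ).
have AZ' : A \subset Z :\ x.
  apply/subsetP=> v vA; rewrite in_setD1 (subsetP AZ _ vA) andbT.
  by apply: contraNneq xA => <-.
have nZ'C : ~~ ((Z :\ x) \subset C).
  apply/subsetPn; exists u; rewrite // in_setD1 uZ andbT.
  by apply: contraNneq uC => ->.
have nCZ' : ~~ (C \subset (Z :\ x)) by apply/subsetPn; exists x; rewrite ?in_setD1 ?eqxx.
have cZ' := caseB1 _ AZ' nZ'C nCZ'.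
have pCZ : C \proper Z by rewrite properE CZ ZC.
have pAZ' : A \proper (Z :\ x).
  rewrite properEneq AZ' andbT; apply: contraNneq nZ'C => <-; exact: AC.
have pZ'Z : (Z :\ x) \proper Z.
  by apply/properP; split; [apply/subsetP=> v; rewrite in_setD1 => /andP[]|exists x; rewrite ?in_setD1 ?eqxx].
have := T_W4 nr AC' pCZ pAZ' pZ'Z nCZ' nZ'C; rewrite cZ' => /(_ dAC sA2 sC2).
case=> [e|[e|//]].
  by move: ZC; rewrite (Pb _ e) AC.
by move: ZC; rewrite (Pe _ e) subxx.
Qed.


Lemma chain3 n k (c : {set 'I_n} -> 'I_k) : ~ rainbow_B2 c -> c set0 != c setT ->
  forall X Y Z : {set 'I_n}, sp c X -> sp c Y -> sp c Z ->
  c X != c Y -> c Y != c Z -> c X != c Z ->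
  exists A B C : {set 'I_n}, [/\ A \proper B, B \proper C, sp c A, sp c B & sp c C] /\
     [/\ c A != c B, c B != c C & c A != c C].
Proof.
move=> nr hne X Y Z sX sY sZ dXY dYZ dXZ.
have key : forall X Y Z : {set 'I_n}, sp c X -> sp c Y -> sp c Z ->
  c X != c Y -> c Y != c Z -> c X != c Z -> X \subset Y -> Y \subset Z ->
  exists A B C : {set 'I_n}, [/\ A \proper B, B \proper C, sp c A, sp c B & sp c C] /\
     [/\ c A != c B, c B != c C & c A != c C].
  move=> X1 Y1 Z1 s1 s2 s3 d1 d2 d3 h1 h2; exists X1, Y1, Z1; split; split=> //.
    by apply: sub_ne h1 _; apply: contraNneq d1 => ->.
  by apply: sub_ne h2 _; apply: contraNneq d2 => ->.
have eqc : forall U V : {set 'I_n}, U \subset V -> V \subset U -> c U = c V.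
  by move=> U V h1 h2; have /eqP-> : U == V by rewrite eqEsubset h1 h2.
case: (F1 nr hne sX sY dXY) => hXY; case: (F1 nr hne sX sZ dXZ) => hXZ;
  case: (F1 nr hne sY sZ dYZ) => hYZ;
  first [ solve [apply: (key X Y Z); first [done | by rewrite eq_sym]]
        | solve [apply: (key X Z Y); first [done | by rewrite eq_sym]]
        | solve [apply: (key Y X Z); first [done | by rewrite eq_sym]]
        | solve [apply: (key Y Z X); first [done | by rewrite eq_sym]]
        | solve [apply: (key Z X Y); first [done | by rewrite eq_sym]]
        | solve [apply: (key Z Y X); first [done | by rewrite eq_sym]]
        ].
Qed.

Lemma three_colors k (a b : 'I_k) : 5 <= k ->
  exists g1 g2 g3 : 'I_k, [/\ [&& g1 != a & g1 != b], [&& g2 != a & g2 != b],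
     [&& g3 != a & g3 != b] & [/\ g1 != g2, g2 != g3 & g1 != g3]].
Proof.
move=> k5.
pose S := [set i : 'I_k | (i != a) && (i != b)].
have hS : 3 <= #|S|.
  have h1 := cardsC S; rewrite card_ord in h1.
  have h2 : #|~: S| <= 2.
    apply: leq_trans (_ : #|[set a; b]| <= 2); last by rewrite cards2; case: (a != b).
    apply: subset_leq_card; apply/subsetP=> i; rewrite !inE negb_and !negbK.
    by case/orP=> ->; rewrite ?orbT.
  lia.
have [g1 g1S] : exists g, g \in S by apply/card_gt0P; apply: leq_trans hS.
have hS1 : 2 <= #|S :\ g1| by move: hS; rewrite (cardsD1 g1) g1S.
have [g2 g2S] : exists g, g \in S :\ g1 by apply/card_gt0P; apply: leq_trans hS1.
have hS2 : 1 <= #|S :\ g1 :\ g2| by move: hS1; rewrite (cardsD1 g2) g2S.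
have [g3 g3S] : exists g, g \in S :\ g1 :\ g2 by apply/card_gt0P.
move: g2S g3S; rewrite !in_setD1 !inE => /andP[d21 s2] /and3P[d32 d31 s3].
move: g1S; rewrite inE => s1.
by exists g1, g2, g3; split=> //; split; rewrite // eq_sym.
Qed.


Ltac colclash :=
  match goal with
  | e1 : ?x = ?v, e2 : ?y = ?v, d : is_true (?x != ?y) |- _ =>
      by move: d; rewrite e1 e2 eqxx
  | e1 : ?x = ?v, e2 : ?y = ?v, d : is_true (?y != ?x) |- _ =>
      by move: d; rewrite e1 e2 eqxx
  | e1 : ?x = ?v, e2 : ?x = ?w, d : is_true (?v != ?w) |- _ =>
      by move: d; rewrite -e1 -e2 eqxx
  | e1 : ?x = ?v, e2 : ?x = ?w, d : is_true (?w != ?v) |- _ =>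
      by move: d; rewrite -e1 -e2 eqxx
  end.

Lemma type1_norainbow n k (c : {set 'I_n} -> 'I_k) : type1 c -> ~ rainbow_B2 c.
Proof.
case=> X0 [Y0 [[h0 hXY hYT hcard] [a [b [d [e [f [hu [ha [hb hd he hf hoth]]]]]]]]]].
move: hu; rewrite /= !inE !negb_or => /andP[/and4P[ab ad ae af] /andP[/and3P[bd be bf] /andP[/andP[de df] /andP[ef _]]]].
have XY : X0 \subset Y0 by apply: proper_sub.
have cls : forall Z : {set 'I_n}, (c Z = a /\ ~~ (X0 \subset Z)) \/ (c Z = b /\ Z = X0) \/
    (c Z = d /\ (X0 \subset Z /\ Z \subset Y0)) \/ (c Z = e /\ Z = Y0) \/ (c Z = f /\ ~~ (Z \subset Y0)).
  move=> Z; case: (boolP (X0 \subset Z)) => XZ; case: (boolP (Z \subset Y0)) => ZY.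
  - case: (eqVneq Z X0) => [->|ZX]; first by right; left.
    case: (eqVneq Z Y0) => [->|ZY']; first by do 3 right; left.
    do 2 right; left; split; last by []. apply: hd; first by rewrite properEneq XZ andbT eq_sym.
    by rewrite properEneq ZY ZY'.
  - by do 4 right; split=> //; apply: hf.
  - by left; split=> //; apply: ha.
  - by case: (hoth Z ZY XZ) => E; [left|do 4 right].
move=> [W1 [W2 [W3 [W4 [[h12 h24 h13 h34 [n23 n32]]]]]]].
rewrite /= !inE !negb_or => /andP[/and3P[d12 d13 d14] /andP[/andP[d23 d24] /andP[d34 _]]].
have p12 := proper_sub h12; have p13 := proper_sub h13.
have p24 := proper_sub h24; have p34 := proper_sub h34.
have side : forall U V : {set 'I_n}, W1 \subset U -> U \subset W4 -> W1 \subset V -> V \subset W4 ->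
    c W1 != c U -> c W1 != c V -> c U != c V -> c U != c W4 -> c V != c W4 ->
    c U <> a /\ c U <> f.
  move=> U V h1U hU4 h1V hV4 d1U d1V dUV dU4 dV4; split=> eU.
    have nXU : ~~ (X0 \subset U).
      case: (cls U) => [[_ //]|[[E _]|[[E _]|[[E _]|[E _]]]]]; colclash.
    have nX1 : ~~ (X0 \subset W1) by apply: contra nXU => h; apply: subset_trans h h1U.
    case: (cls W1) => [[E _]|[[_ E]|[[_ [E _]]|[[_ E]|[Ef E]]]]].
    - colclash.
    - by move: nX1; rewrite E subxx.
    - by move: nX1; rewrite E.
    - by move: nX1; rewrite E XY.
    have nV : ~~ (V \subset Y0) by apply: contra E => h; apply: subset_trans h1V h.
    case: (cls V) => [[E' _]|[[_ E']|[[_ [_ E']]|[[_ E']|[E' _]]]]].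
    - colclash.
    - by move: nV; rewrite E' XY.
    - by move: nV; rewrite E'.
    - by move: nV; rewrite E' subxx.
    - by move: d1V; rewrite Ef E' eqxx.
  have nUY : ~~ (U \subset Y0).
    case: (cls U) => [[E _]|[[E _]|[[E _]|[[E _]|[_ //]]]]]; colclash.
  have n4 : ~~ (W4 \subset Y0) by apply: contra nUY => h; apply: subset_trans hU4 h.
  case: (cls W4) => [[E nX4]|[[_ E]|[[_ [_ E]]|[[_ E]|[E _]]]]]; last first.
  - colclash.
  - by move: n4; rewrite E subxx.
  - by move: n4; rewrite E.
  - by move: n4; rewrite E XY.
  have nXV : ~~ (X0 \subset V) by apply: contra nX4 => h; apply: subset_trans h hV4.
  case: (cls V) => [[E' _]|[[_ E']|[[_ [E' _]]|[[_ E']|[E' _]]]]].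
  - by move: dV4; rewrite E E' eqxx.
  - by move: nXV; rewrite E' subxx.
  - by move: nXV; rewrite E'.
  - by move: nXV; rewrite E' XY.
  - by move: dUV; rewrite eU E' eqxx.
have [s2a s2f] := side W2 W3 p12 p24 p13 p34 d12 d13 d23 d24 d34.
have [s3a s3f] := side W3 W2 p13 p34 p12 p24 d13 d12 (ltac:(by rewrite eq_sym)) d34 d24.
case: (cls W2) => [[/s2a[] _]|[[E2 E2']|[[E2 [E2' E2'']]|[[E2 E2']|[/s2f[] _]]]]];
case: (cls W3) => [[/s3a[] _]|[[E3 E3']|[[E3 [E3' E3'']]|[[E3 E3']|[/s3f[] _]]]]];
  try colclash.
- by move: n23; rewrite E2' E3'.
- by move: n23; rewrite E2' E3' XY.
- by move: n32; rewrite E3' E2'.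
- by move: n23; rewrite E3' E2''.
- by move: n32; rewrite E3' E2' XY.
- by move: n32; rewrite E2' E3''.
Qed.


Theorem lemma2p5 (k n : nat) (c : {set 'I_n} -> 'I_k) :
  5 <= k -> 4 <= n -> exact_coloring c ->
  c set0 != c [set: 'I_n] ->
  (~ rainbow_B2 c <-> (k = 5 /\ type1 c)).
Proof.
move=> k5 n4 ex hne; split; last by case=> _; apply: type1_norainbow.
move=> nr.
have [g1 [g2 [g3 [s1 s2 s3 [d12 d23 d13]]]]] := three_colors (c set0) (c setT) k5.
have [S1 e1] := ex g1; have [S2 e2] := ex g2; have [S3 e3] := ex g3.
have [A [B [C [[AB BC sA sB sC] [dAB dBC dAC]]]]] :=
  chain3 nr hne (X:=S1) (Y:=S2) (Z:=S3) (ltac:(by rewrite /sp e1)) (ltac:(by rewrite /sp e2))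
    (ltac:(by rewrite /sp e3)) (ltac:(by rewrite e1 e2)) (ltac:(by rewrite e2 e3)) (ltac:(by rewrite e1 e3)).
have [Pb Pe Pd Po] := structure nr hne AB BC sA sB sC dAB dBC dAC.
have [La Lb] := low_part nr hne AB BC sA sB sC dAB dBC dAC.
have ML' := ML nr hne AB BC sA sB sC dAB dBC dAC.
have AC := proper_trans AB BC.
have sA' := sA; have sB' := sB; have sC' := sC.
case/andP: sA' => sA1 sA2; case/andP: sB' => sB1 sB2; case/andP: sC' => sC1 sC2.
split.
  apply/eqP; rewrite eqn_leq k5 andbT.
  rewrite -[k]card_ord; apply: leq_trans (card_size [:: c set0; c setT; c A; c B; c C]).
  apply: subset_leq_card; apply/subsetP => i _; have [Z <-] := ex i.
  rewrite !inE; case: (boolP (sp c Z)) => sZ.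
    by case: (Po Z sZ) => ->; rewrite eqxx ?orbT.
  by move: sZ; rewrite /sp negb_and !negbK => /orP[] /eqP->; rewrite eqxx ?orbT.
exists A, C; split.
  split.
  - by rewrite proper0; apply: contraNneq sA1 => ->.
  - exact: AC.
  - by rewrite properT; apply: contraNneq sC2 => ->.
  - by rewrite addn2; apply: leq_ltn_trans (proper_card AB) (proper_card BC).
exists (c set0), (c A), (c B), (c C), (c setT); split.
  rewrite /= !inE !negb_or hne dAB dBC dAC sA2 sB2 sC2.
  by rewrite ![c set0 == _]eq_sym (negbTE sA1) (negbTE sB1) (negbTE sC1).
split; first exact: La.
split=> //.
move=> Z ZC AZ.
case: (boolP (sp c Z)) => sZ.
  exfalso; case: (Po Z sZ) => E.
  - by move: AZ; rewrite (Pb _ E) subxx.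
  - by have [h _] := Pd _ E; move: AZ; rewrite (proper_sub h).
  - by move: ZC; rewrite (Pe _ E) subxx.
by move: sZ; rewrite /sp negb_and !negbK => /orP[] /eqP->; [left|right].
Qed.
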